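(* Let $M$ be a monoid in $\mathcal{C}$ and let $V=\mathbb{R}\otimes_\mathbb{Z}\mathrm{gp}(M)$. The following are equivalent: (a) $M$ is a UFM; (b) every face submonoid of $M$ is a UFM; (c) $|\mathcal{A}(M)|=\dim\mathsf{cone}_V(M)$.
   Context: Convention: all monoids are commutative, cancellative, and reduced (only invertible element $0$), written additively; $M^\bullet=M\setminus\{0\}$; atoms $\mathcal{A}(M)=M^\bullet\setminus(M^\bullet+M^\bullet)$. $\mathcal{C}$ is the class of monoids isomorphic to a submonoid of a free commutative monoid of finite rank (equivalently, of $(\mathbb{N}^d,+)$). $M$ is regarded as a submonoid of $V=\mathbb{R}\otimes_\mathbb{Z}\mathrm{gp}(M)$ via $M\hookrightarrow\mathrm{gp}(M)\hookrightarrow V$; $\mathsf{cone}_V(M)$ is the set of finite nonnegative real linear combinations of elements of $M$, and its dimension is that of its linear span. A face of a cone $C$ is a cone $F\subseteq C$ such that whenever $x,y\in C$ and $F$ meets the open segment $\{tx+(1-t)y:0<t<1\}$, then $x,y\in F$. A face submonoid of $M$ is a submonoid $M\cap F$ with $F$ a face of $\mathsf{cone}_V(M)$. A monoid is a UFM (unique factorization monoid) if every element is a sum of atoms and this sum is unique up to order (equivalently, every nonzero element is a sum of prime elements). *)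

(* Defs.v *)
From HB Require Import structures.
From mathcomp Require Import all_boot all_order all_algebra.
Set Implicit Arguments. Unset Strict Implicit. Unset Printing Implicit Defensive.
Import Order.TTheory GRing.Theory Num.Theory.
Local Open Scope ring_scope.

(* A monoid in the class C is represented (up to isomorphism) as a submonoid
   M of the free commutative monoid (N^d, +), realised as 'rV[nat]_d. *)
Definition submonoid (d : nat) (M : 'rV[nat]_d -> Prop) : Prop :=
  M 0 /\ (forall x y, M x -> M y -> M (x + y)).

Definition atom (d : nat) (N : 'rV[nat]_d -> Prop) (a : 'rV[nat]_d) : Prop :=
  N a /\ a != 0 /\
  ~ (exists b c, N b /\ b != 0 /\ N c /\ c != 0 /\ a = b + c).

Definition UFM (d : nat) (N : 'rV[nat]_d -> Prop) : Prop :=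
  (forall x, N x -> exists s : seq 'rV[nat]_d,
       (forall a, a \in s -> atom N a) /\ x = \sum_(a <- s) a) /\
  (forall s t : seq 'rV[nat]_d,
       (forall a, a \in s -> atom N a) -> (forall a, a \in t -> atom N a) ->
       \sum_(a <- s) a = \sum_(a <- t) a -> perm_eq s t).

(* The embedding N^d -> R^d (V = R (x) gp(M) is identified with the span of M in R^d). *)
Definition embed (R : realFieldType) (d : nat) (x : 'rV[nat]_d) : 'rV[R]_d :=
  map_mx (fun n : nat => n%:R) x.

Definition cone (R : realFieldType) (d : nat) (M : 'rV[nat]_d -> Prop)
    (v : 'rV[R]_d) : Prop :=
  exists s : seq (R * 'rV[nat]_d),
    (forall p, p \in s -> 0 <= p.1 /\ M p.2) /\
    v = \sum_(p <- s) p.1 *: embed R p.2.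

Definition is_cone (R : realFieldType) (d : nat) (F : 'rV[R]_d -> Prop) : Prop :=
  F 0 /\ (forall x y, F x -> F y -> F (x + y)) /\
  (forall (t : R) x, 0 <= t -> F x -> F (t *: x)).

Definition face (R : realFieldType) (d : nat) (C F : 'rV[R]_d -> Prop) : Prop :=
  is_cone F /\ (forall x, F x -> C x) /\
  (forall x y, C x -> C y ->
     (exists t : R, 0 < t /\ t < 1 /\ F (t *: x + (1 - t) *: y)) ->
     F x /\ F y).

Definition face_submonoid (R : realFieldType) (d : nat) (M : 'rV[nat]_d -> Prop)
    (F : 'rV[R]_d -> Prop) (x : 'rV[nat]_d) : Prop :=
  M x /\ F (embed R x).

Definition has_dim (R : realFieldType) (d : nat) (C : 'rV[R]_d -> Prop) (n : nat)
    : Prop :=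
  exists s : seq 'rV[R]_d,
    (forall v, v \in s -> C v) /\ free s /\ size s = n /\
    (forall v, C v -> v \in <<s>>%VS).

Arguments cone R [d] M v.
Arguments embed R [d] x.

(* Main.v *)
Require Import Defs.
From HB Require Import structures.
From mathcomp Require Import all_boot all_order all_algebra.
From Stdlib Require Import Classical.
From mathcomp Require Import zify ring.
Set Implicit Arguments. Unset Strict Implicit. Unset Printing Implicit Defensive.
Import Order.TTheory GRing.Theory Num.Theory.
Module Part1.
Local Open Scope ring_scope.

Section Basics.
Variable d : nat.
Implicit Types x y : 'rV[nat]_d.

Lemma embed0 (R : realFieldType) : embed R (0 : 'rV[nat]_d) = 0.
Proof. by apply/matrixP => i j; rewrite !mxE. Qed.

Lemma embedD (R : realFieldType) x y : embed R (x + y) = embed R x + embed R y.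
Proof. by apply/matrixP => i j; rewrite !mxE natrD. Qed.

Lemma embed_sum (R : realFieldType) (I : Type) (r : seq I) (F : I -> 'rV[nat]_d) :
  embed R (\sum_(i <- r) F i) = \sum_(i <- r) embed R (F i).
Proof.
elim: r => [|a r IH]; first by rewrite !big_nil embed0.
by rewrite !big_cons embedD IH.
Qed.

Lemma embedMn (R : realFieldType) x k : embed R (x *+ k) = embed R x *+ k.
Proof. by elim: k => [|k IH]; rewrite ?mulr0n ?embed0 // !mulrS embedD IH. Qed.

Lemma embed_inj (R : realFieldType) x y : embed R x = embed R y -> x = y.
Proof.
move=> E; apply/matrixP => i j.
have := congr1 (fun M : 'rV[R]_d => M i j) E; rewrite !mxE => /eqP; rewrite eqr_nat.
by move/eqP.
Qed.

Definition wt x : nat := (\sum_j x ord0 j)%N.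

Lemma wtD x y : wt (x + y) = (wt x + wt y)%N.
Proof. by rewrite /wt -big_split /=; apply: eq_bigr => j _; rewrite mxE. Qed.

Lemma wt0 x : wt x = 0%N -> x = 0.
Proof.
move=> /eqP; rewrite /wt sum_nat_eq0 => /forallP H.
apply/matrixP => i j; rewrite ord1 mxE; exact/eqP/H.
Qed.

Lemma atomic (M : 'rV[nat]_d -> Prop) : submonoid M -> forall x, M x ->
  exists s : seq 'rV[nat]_d, (forall a, a \in s -> atom M a) /\ x = \sum_(a <- s) a.
Proof.
move=> HM x; have [n Hn] : exists n, (wt x < n)%N by exists (wt x).+1.
elim: n x Hn => [//|n IH] x Hn Mx.
have [->|x0] := eqVneq x 0; first by exists [::]; rewrite big_nil.
case: (classic (atom M x)) => Ax.
  by exists [:: x]; split; [move=> a; rewrite inE => /eqP -> | rewrite big_seq1].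
have : exists b c, M b /\ b != 0 /\ M c /\ c != 0 /\ x = b + c.
  apply: NNPP => H; apply: Ax; split=> //; split=> //.
move=> [b [c [Mb [b0 [Mc [c0 Ex]]]]]].
have wb : (wt b < n)%N.
  have : wt c != 0%N by apply/eqP => /wt0 /eqP; rewrite (negbTE c0).
  move: Hn; rewrite Ex wtD; lia.
have wc : (wt c < n)%N.
  have : wt b != 0%N by apply/eqP => /wt0 /eqP; rewrite (negbTE b0).
  move: Hn; rewrite Ex wtD; lia.
have [s1 [A1 E1]] := IH b wb Mb; have [s2 [A2 E2]] := IH c wc Mc.
exists (s1 ++ s2); split; last by rewrite big_cat -E1 -E2.
by move=> a; rewrite mem_cat => /orP [/A1|/A2].
Qed.

Lemma sum_in (M : 'rV[nat]_d -> Prop) : submonoid M -> forall s : seq 'rV[nat]_d,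
  (forall a, a \in s -> M a) -> M (\sum_(a <- s) a).
Proof.
move=> [M0 MD]; elim=> [|a s IH] H; first by rewrite big_nil.
rewrite big_cons; apply: MD; first by apply: H; rewrite inE eqxx.
by apply: IH => b bs; apply: H; rewrite inE bs orbT.
Qed.

End Basics.

End Part1.
Import Part1.

Module Part2.
Local Open Scope ring_scope.

Section Counts.
Variable d : nat.

Lemma sum_counts (s u : seq 'rV[nat]_d) : uniq s -> {subset u <= s} ->
  \sum_(a <- u) a = \sum_(i < size s) s`_i *+ count_mem s`_i u.
Proof.
move=> us; elim: u => [|a u IH] H.
  by rewrite big_nil big1 // => i _; rewrite mulr0n.
rewrite big_cons IH; last by move=> b bu; apply: H; rewrite inE bu orbT.
have as_ : a \in s by apply: H; rewrite inE eqxx.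
rewrite [RHS](eq_bigr (fun i : 'I_(size s) => s`_i *+ (a == s`_i) + s`_i *+ count_mem s`_i u)); last first.
  by move=> i _; rewrite /= mulrnDr.
rewrite big_split /=; congr (_ + _).
have ks : (index a s < size s)%N by rewrite index_mem.
rewrite (bigD1 (Ordinal ks)) //= nth_index // eqxx mulr1n big1 ?addr0 // => i ik.
suff -> : (a == s`_i) = false by rewrite mulr0n.
rewrite -{1}(nth_index 0 as_) nth_uniq //; apply/negbTE; rewrite eq_sym.
by apply: contra ik => /eqP E; apply/eqP/val_inj.
Qed.

Definition mkseq_of (s : seq 'rV[nat]_d) (m : 'I_(size s) -> nat) :=
  flatten [seq nseq (m i) s`_i | i <- enum 'I_(size s)].

Lemma mkseq_sub (s : seq 'rV[nat]_d) (m : 'I_(size s) -> nat) : {subset mkseq_of m <= s}.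
Proof.
move=> y /flatten_mapP [i _]; rewrite mem_nseq => /andP [_ /eqP ->].
exact: mem_nth.
Qed.

Lemma mkseq_count (s : seq 'rV[nat]_d) (m : 'I_(size s) -> nat) (j : 'I_(size s)) : uniq s -> count_mem s`_j (mkseq_of m) = m j.
Proof.
move=> us; rewrite /mkseq_of count_flatten -map_comp sumnE big_map big_enum /=.
rewrite (bigD1 j) //= count_nseq /= eqxx mul1n big1 ?addn0 // => i ij.
rewrite count_nseq /= nth_uniq // ?ltn_ord //.
suff -> : (i == j :> nat) = false by [].
by apply/negbTE; apply: contra ij => /eqP E; apply/eqP/val_inj.
Qed.

Lemma mkseq_sum (s : seq 'rV[nat]_d) (m : 'I_(size s) -> nat) : uniq s -> \sum_(a <- mkseq_of m) a = \sum_(i < size s) s`_i *+ m i.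
Proof.
move=> us; rewrite (sum_counts us (@mkseq_sub s m)).
by apply: eq_bigr => i _; rewrite mkseq_count.
Qed.


Lemma ufm_coef (M : 'rV[nat]_d -> Prop) (s : seq 'rV[nat]_d) : UFM M -> uniq s ->
  (forall a, a \in s -> atom M a) -> forall m1 m2 : 'I_(size s) -> nat,
  \sum_(i < size s) s`_i *+ m1 i = \sum_(i < size s) s`_i *+ m2 i -> forall j, m1 j = m2 j.
Proof.
move=> [_ U] us As m1 m2 E j.
have P : perm_eq (mkseq_of m1) (mkseq_of m2).
  apply: U; first by move=> a /mkseq_sub /As.
    by move=> a /mkseq_sub /As.
  by rewrite !mkseq_sum.
by rewrite -(mkseq_count m1 j us) -(mkseq_count m2 j us); apply/permP.
Qed.

Definition Arat (s : seq 'rV[nat]_d) : 'M[rat]_(size s, d) :=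
  \matrix_(i, j) ((nth 0 s i) ord0 j)%:R.

End Counts.

End Part2.
Import Part2.

Module Part3.
Local Open Scope ring_scope.

Lemma natMn_helper (x m : nat) : ((x *+ m)%:R : rat) = m%:R * x%:R.
Proof. by elim: m => [|m IH]; rewrite ?mulr0n ?mul0r // mulrS natrD IH mulrS mulrDl mul1r. Qed.

Section RatFree.
Variable d : nat.

Lemma clear_den n (q : 'I_n -> rat) : exists (D : int) (z : 'I_n -> int),
  D != 0 /\ forall i, (z i)%:~R = D%:~R * q i.
Proof.
exists (\prod_i denq (q i)), (fun i => numq (q i) * \prod_(k | k != i) denq (q k)).
split.
  by rewrite prodf_seq_neq0; apply/allP => i _; rewrite denq_neq0.
move=> i; rewrite [X in _ = X%:~R * _](bigD1 i) //= !intrM; rewrite -[X in _ = _ * X](divq_num_den (q i)).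
have := denq_neq0 (q i); rewrite -(intr_eq0 rat) => H.
by field.
Qed.

Lemma rat_free (M : 'rV[nat]_d -> Prop) (s : seq 'rV[nat]_d) : UFM M -> uniq s ->
  (forall a, a \in s -> atom M a) -> row_free (Arat s).
Proof.
move=> UM us As; apply: NNPP => nf.
have : kermx (Arat s) != 0 by rewrite kermx_eq0; apply/negP.
move=> K0.
have [i [c Hic]] : exists i c, kermx (Arat s) i c != 0.
  apply: NNPP => H; move/eqP: K0; apply; apply/matrixP => i c; rewrite [X in _ = X]mxE.
  apply/eqP; apply: NNPP => H'; apply: H; exists i, c; by apply/negP.
pose q := fun k : 'I_(size s) => (kermx (Arat s) i k : rat).
have Q : forall c', \sum_k q k * Arat s k c' = 0.
  move=> c'; have := mulmx_ker (Arat s); move/matrixP/(_ i c').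
  by rewrite !mxE.
have [D [z [D0 Dz]]] := clear_den q.
pose m1 k := (if (0 <= z k)%R then `|z k| else 0)%N.
pose m2 k := (if (0 <= z k)%R then 0 else `|z k|)%N.
have zm : forall k, z k = (m1 k)%:Z - (m2 k)%:Z.
  move=> k; rewrite /m1 /m2; case: ifP => h.
    by rewrite subr0 gez0_abs.
  by rewrite sub0r ltz0_abs ?opprK // ltNge h.
have E : \sum_(k < size s) s`_k *+ m1 k = \sum_(k < size s) s`_k *+ m2 k.
  apply/matrixP => r c'; rewrite !summxE.
  apply/eqP; rewrite -(eqr_nat rat) !natr_sum; apply/eqP; apply/eqP; rewrite -subr_eq0.
  rewrite -sumrB.
  apply/eqP; transitivity ((D%:~R : rat) * \sum_k q k * Arat s k c'); last by rewrite Q mulr0.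
  rewrite mulr_sumr; apply: eq_bigr => k _; rewrite mulrA -Dz zm !mulmxnE ord1 mxE.
  by rewrite rmorphB /= !pmulrn -!pmulrn !natMn_helper mulrBl.
have := ufm_coef UM us As E c; rewrite /m1 /m2.
have : z c != 0.
  have : (z c)%:~R != 0 :> rat. rewrite Dz mulf_neq0 // ?intq_eq0; exact: D0.
  by rewrite intq_eq0.
case: ifP => h z0; first by move=> h2; move: z0; rewrite -normr_eq0 -abszE h2.
by move=> h2; move: z0; rewrite -normr_eq0 -abszE -h2.
Qed.

End RatFree.

End Part3.
Import Part3.

Module Part4.
Local Open Scope ring_scope.

Section FreeR.
Variable d : nat.
Variable R : realFieldType.

Lemma nth_embed (s : seq 'rV[nat]_d) (i : nat) : (i < size s)%N ->
  (map (@embed R d) s)`_i = embed R s`_i.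
Proof. by move=> H; rewrite -(@embed0 d R) (nth_map 0). Qed.

Lemma free_R (s : seq 'rV[nat]_d) : row_free (Arat s) -> free (map (@embed R d) s).
Proof.
move=> rf.
have rfR : row_free (map_mx (@ratr R) (Arat s)).
  by rewrite /row_free mxrank_map.
apply/(@freeP _ _ _ (map_tuple (@embed R d) (in_tuple s))) => k Hk i.
pose u := \row_j k j.
have : u *m map_mx (@ratr R) (Arat s) = 0 *m map_mx (@ratr R) (Arat s).
  rewrite mul0mx; apply/matrixP => r c; rewrite !mxE.
  apply: (@etrans _ _ (\sum_j (k j *: (map (@embed R d) s)`_j) 0 c)); last first.
    by rewrite -summxE /= Hk mxE.
  apply: eq_bigr => j _; rewrite !mxE nth_embed // !mxE ratr_nat.
  done.
move/(row_free_inj rfR)/matrixP/(_ 0 i); rewrite !mxE; done.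
Qed.

End FreeR.

End Part4.
Import Part4.

Module Part5.
Local Open Scope ring_scope.

Section Part1.
Variable d : nat.
Variable R : realFieldType.
Implicit Types M N : 'rV[nat]_d -> Prop.

Lemma atom_ext N N' : (forall x, N x <-> N' x) -> forall a, atom N a -> atom N' a.
Proof.
move=> E a [Na [a0 H]]; split; first by apply/E.
split=> // [[b [c [Nb [b0 [Nc [c0 Ea]]]]]]]; apply: H.
by exists b, c; rewrite !E.
Qed.

Lemma ufm_ext N N' : (forall x, N x <-> N' x) -> UFM N -> UFM N'.
Proof.
move=> E [U1 U2]; have E' : forall x, N' x <-> N x by move=> x; split => /E.
split.
  move=> x /E /U1 [s [As ->]]; exists s; split=> // a /As; exact: atom_ext.
move=> s t As At; apply: U2.
  by move=> a /As; apply: atom_ext.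
by move=> a /At; apply: atom_ext.
Qed.

Lemma cone_in M x : M x -> cone R M (embed R x).
Proof. by move=> Mx; exists [:: (1, x)]; split; [move=> p; rewrite inE => /eqP -> | rewrite big_seq1 scale1r]. Qed.

Lemma cone_is_cone M : is_cone (cone R M).
Proof.
split; first by exists [::]; rewrite big_nil.
split.
  move=> x y [s1 [H1 ->]] [s2 [H2 ->]]; exists (s1 ++ s2); rewrite big_cat; split=> //.
  by move=> p; rewrite mem_cat => /orP [/H1|/H2].
move=> t x t0 [s [H ->]]; exists [seq (t * p.1, p.2) | p <- s]; split.
  move=> p /mapP [q qs ->] /=; have [q1 q2] := H q qs; split=> //; exact: mulr_ge0.
by rewrite big_map scaler_sumr; apply: eq_bigr => p _; rewrite scalerA.
Qed.

Lemma cone_face M : face (cone R M) (cone R M).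
Proof. by split; [exact: cone_is_cone | split=> // x y Cx Cy _]. Qed.

Lemma face_sub_cone M x : face_submonoid M (cone R M) x <-> M x.
Proof. by split; [case | move=> Mx; split=> //; exact: cone_in]. Qed.

Lemma face_div M F : face (cone R M) F -> forall b c, M b -> M c ->
  F (embed R (b + c)) -> F (embed R b).
Proof.
move=> [[F0 [FD FZ]] [FC FF]] b c Mb Mc Fbc.
have C2 : forall y, M y -> cone R M (2%:R *: embed R y).
  move=> y My; exists [:: (2%:R, y)]; split; last by rewrite big_seq1.
  by move=> p; rewrite inE => /eqP -> /=; split.
have h2 : (2%:R : R) != 0 by rewrite pnatr_eq0.
have [Fb _] : F (2%:R *: embed R b) /\ F (2%:R *: embed R c).
  apply: FF; [exact: C2 | exact: C2 |].
  exists (2%:R^-1); split; first by rewrite invr_gt0 ltr0n.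
  split; first by rewrite invf_lt1 ?ltr0n // ltr1n.
  have -> : (1 - 2%:R^-1 : R) = 2%:R^-1.
    by apply: (mulfI h2); rewrite mulrBr mulfV // mulr1; ring.
  by rewrite !scalerA mulVf // !scale1r -embedD.
have -> : embed R b = 2%:R^-1 *: (2%:R *: embed R b) by rewrite scalerA mulVf // scale1r.
by apply: FZ => //; rewrite invr_ge0 ler0n.
Qed.

Lemma ufm_face M F : submonoid M -> UFM M -> face (cone R M) F -> UFM (face_submonoid M F).
Proof.
move=> HM [U1 U2] fF.
have AT : forall a, atom (face_submonoid M F) a <-> atom M a /\ F (embed R a).
  move=> a; split.
    move=> [[Ma Fa] [a0 H]]; split=> //; split=> //; split=> // [[b [c [Mb [b0 [Mc [c0 Ea]]]]]]].
    apply: H; exists b, c; do !split=> //.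
      by apply: (face_div fF Mb Mc); rewrite -Ea.
    by apply: (face_div fF Mc Mb); rewrite addrC -Ea.
  move=> [[Ma [a0 H]] Fa]; split; first by split.
  split=> // [[b [c [[Mb _] [b0 [[Mc _] [c0 Ea]]]]]]]; apply: H.
  by exists b, c.
split.
  move=> x [Mx Fx]; have [s [As Ex]] := U1 x Mx; exists s; split=> //.
  move=> a aS; apply/AT; split; first exact: As.
  have P := perm_to_rem aS; move: Ex; rewrite (perm_big _ P) big_cons => Ex.
  apply: (face_div fF (c := \sum_(y <- rem a s) y)).
  - by case: (As a aS).
  - apply: (sum_in HM) => y /mem_rem yS; by case: (As y yS).
  - by rewrite -Ex.
move=> s t As At; apply: U2.
  by move=> a /As /AT [].
by move=> a /At /AT [].
Qed.

End Part1.

End Part5.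
Import Part5.

Module Part6.
Local Open Scope ring_scope.

Section Part2.
Variable d : nat.
Variable R : realFieldType.
Implicit Types M N : 'rV[nat]_d -> Prop.

Lemma cone_span M (s : seq 'rV[nat]_d) : submonoid M ->
  (forall a, atom M a -> a \in s) ->
  forall v, cone R M v -> v \in <<map (@embed R d) s>>%VS.
Proof.
move=> HM As v [t [Ht ->]]; rewrite big_seq; apply: rpred_sum => p pt; apply: rpredZ.
have [_ Mp] := Ht p pt.
have [u [Au ->]] := atomic HM Mp.
rewrite embed_sum big_seq; apply: rpred_sum => a au; apply: memv_span; apply: map_f.
exact/As/Au.
Qed.

Definition atseq M (t : seq 'rV[nat]_d) := uniq t /\ forall a, a \in t -> atom M a.

Lemma max_atseq M : UFM M -> exists t, atseq M t /\
  forall t', atseq M t' -> (size t' <= size t)%N.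
Proof.
move=> UM.
have bnd : forall t, atseq M t -> (size t <= d)%N.
  move=> t [ut At]; have := rat_free UM ut At; rewrite /row_free => /eqP <-.
  exact: rank_leq_col.
suff : forall m t, atseq M t -> (d - size t <= m)%N -> exists t0, atseq M t0 /\
  forall t', atseq M t' -> (size t' <= size t0)%N.
  by move=> H; apply: (H d [::]); [split | rewrite subn0].
elim=> [|m IH] t At hm.
  exists t; split=> // t' /bnd; move: hm (bnd t At); lia.
case: (classic (exists t', atseq M t' /\ (size t < size t')%N)).
  move=> [t' [At' lt]]; apply: (IH t' At'); move: (bnd t' At'); lia.
move=> H; exists t; split=> // t' At'; apply: NNPP => nle; apply: H; exists t'; split=> //.
by rewrite ltnNge; apply/negP.
Qed.

Lemma ufm_dim M : submonoid M -> UFM M -> exists s : seq 'rV[nat]_d,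
  uniq s /\ (forall a, a \in s <-> atom M a) /\ has_dim (cone R M) (size s).
Proof.
move=> HM UM; have [t [[ut At] mx]] := max_atseq UM.
have iff : forall a, a \in t <-> atom M a.
  move=> a; split; first exact: At.
  move=> Aa; apply: NNPP => nin.
  have : (size (a :: t) <= size t)%N.
    apply: mx; split; first by rewrite /= ut andbT; apply/negP.
    by move=> b; rewrite inE => /orP [/eqP ->|/At].
  by rewrite /= ltnn.
exists t; split=> //; split=> //.
exists (map (@embed R d) t); split.
  by move=> v /mapP [a /At [Ma _] ->]; apply: cone_in.
split; first exact/free_R/(rat_free UM ut At).
split; first by rewrite size_map.
by apply: cone_span => // a /iff.
Qed.

End Part2.

End Part6.
Import Part6.

Module Part7.
Local Open Scope ring_scope.

Section Part2b.
Variable d : nat.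
Variable R : realFieldType.
Implicit Types M N : 'rV[nat]_d -> Prop.

Lemma dim_ufm M (s : seq 'rV[nat]_d) : submonoid M -> uniq s ->
  (forall a, a \in s <-> atom M a) -> has_dim (cone R M) (size s) -> UFM M.
Proof.
move=> HM us iff [s0 [C0 [f0 [sz0 sp0]]]].
have fr : free (map (@embed R d) s).
  have Hsub : (<<s0>> <= <<map (@embed R d) s>>)%VS.
    apply/span_subvP => v /C0; apply: cone_span => // a Ha; exact/iff.
  have := dimvS Hsub; have := dim_span (map (@embed R d) s).
  move: f0; rewrite /free size_map => /eqP ->; rewrite sz0 => h1 h2.
  by apply/eqP/anti_leq; rewrite h1 h2.
split; first exact: atomic.
move=> u w Au Aw E.
have su : {subset u <= s} by move=> a /Au /iff.
have sw : {subset w <= s} by move=> a /Aw /iff.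
have E2 := congr1 (@embed R d) E.
rewrite (sum_counts us su) (sum_counts us sw) !embed_sum in E2.
have K : forall i : 'I_(size s), count_mem s`_i u = count_mem s`_i w.
  move: fr => /(@freeP _ _ _ (map_tuple (@embed R d) (in_tuple s))) H i.
  apply/eqP; rewrite -(eqr_nat R) -subr_eq0; apply/eqP.
  apply: (H (fun i : 'I_(size s) => (count_mem s`_i u)%:R - (count_mem s`_i w)%:R)).
  rewrite /=; under eq_bigr => j _ do rewrite scalerBl !scaler_nat (nth_embed R) // -!embedMn.
  by rewrite sumrB E2 subrr.
rewrite /perm_eq; apply/allP => x _ /=.
case: (boolP (x \in s)) => xs.
  have ks : (index x s < size s)%N by rewrite index_mem.
  by have := K (Ordinal ks); rewrite /= nth_index // => ->.
by rewrite (count_memPn (contra (@su x) xs)) (count_memPn (contra (@sw x) xs)).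
Qed.

End Part2b.

End Part7.
Import Part7.


Theorem mainTheorem7 (R : realFieldType) (d : nat) (M : 'rV[nat]_d -> Prop)
    (HM : submonoid M) :
  (UFM M <-> (forall F : 'rV[R]_d -> Prop,
                 face (cone R M) F -> UFM (face_submonoid M F))) /\
  (UFM M <-> exists s : seq 'rV[nat]_d,
                uniq s /\ (forall a, a \in s <-> atom M a) /\
                has_dim (cone R M) (size s)).
Proof.
split; split.
- by move=> UM F fF; apply: ufm_face.
- move=> H; apply: (ufm_ext (N := face_submonoid M (cone R M))).
    by move=> x; apply: face_sub_cone.
  by apply: H; apply: cone_face.
- by move=> UM; apply: ufm_dim.
- by move=> [s [us [iff hd]]]; exact: (@dim_ufm d R M s HM us iff hd).
Qed.
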